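(* Let $k\geq 2$ and let $G$ be a finite bipartite graph with $d(G)\geq k$. Then $G$ contains a subgraph $H$, bipartite with vertex classes $A$ and $B$, such that $d(H)\geq k/4$, $d_H(v)\leq k$ for every $v\in A$, and either (1) $|A|\geq k^6|B|$, or (2) $\Delta(H)\leq k^7$.
   Context: $d(F)=2e(F)/|V(F)|$ is the average degree, $d_H(v)$ the degree of $v$ in $H$, and $\Delta(H)$ the maximum degree of $H$. *)

(* Defs.v *)
(* A finite simple graph is a symmetric irreflexive relation
   on a finType; a (sub)graph is given by a vertex set V and an edge relation r. *)
From HB Require Import structures.
From mathcomp Require Import all_boot all_order all_algebra.
Set Implicit Arguments. Unset Strict Implicit. Unset Printing Implicit Defensive.
Import Order.TTheory GRing.Theory Num.Theory.

Section Graphs.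
Variable T : finType.

Definition simple_graph (e : rel T) : Prop := symmetric e /\ irreflexive e.

Definition edges (V : {set T}) (r : rel T) : {set {set T}} :=
  [set E : {set T} | [exists x in V, exists y in V,
     [&& x != y, r x y & E == [set x; y]]]].

Definition deg (V : {set T}) (r : rel T) (v : T) : nat := #|[set u in V | r v u]|.

Definition maxdeg (V : {set T}) (r : rel T) : nat := \max_(v in V) deg V r v.

Definition avg_deg (R : realFieldType) (V : {set T}) (r : rel T) : R :=
  ((2 * #|edges V r|)%:R / #|V|%:R)%R.

Definition subgraph (VH : {set T}) (rH : rel T) (V : {set T}) (r : rel T) : Prop :=
  [/\ VH \subset V, symmetric rH &
      forall x y, rH x y -> [/\ x \in VH, y \in VH & r x y]].

Definition bipartite_with (V : {set T}) (r : rel T) (A B : {set T}) : Prop :=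
  [/\ A :&: B = set0, A :|: B = V &
      forall x y, x \in V -> y \in V -> r x y ->
        ((x \in A) && (y \in B)) || ((x \in B) && (y \in A))].

Definition bipartite (V : {set T}) (r : rel T) : Prop :=
  exists A B, bipartite_with V r A B.

End Graphs.

(* Main.v *)
Require Import Defs.
From HB Require Import structures.
From mathcomp Require Import all_boot all_order all_algebra.
From mathcomp Require Import ring lra zify.
Import Order.TTheory GRing.Theory Num.Theory.
Set Implicit Arguments. Unset Strict Implicit. Unset Printing Implicit Defensive.
Lemma card_sum (T : finType) (Z : {set T}) (p : pred T) :
  #|[set u in Z | p u]| = \sum_(u in Z) (p u : nat).
Proof.
rewrite -sum1_card big_mkcond /= [RHS]big_mkcond /=.
apply: eq_bigr => u _; rewrite !inE; by case: (u \in Z); case: (p u).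
Qed.

Lemma edges_card (T : finType) (V : {set T}) (r : rel T) (A B : {set T}) :
  symmetric r -> bipartite_with V r A B ->
  #|edges V r| = \sum_(b in B) deg V r b.
Proof.
move=> rs [AB0 ABV Hr].
have BV : B \subset V by rewrite -ABV subsetUr.
have AV : A \subset V by rewrite -ABV subsetUl.
have disj : forall x, x \in A -> x \in B -> False.
  by move=> x xA xB; move/setP: AB0 => /(_ x); rewrite !inE xA xB.
set S := [set p : T * T | [&& p.1 \in B, p.2 \in V & r p.1 p.2]].
have S2A : forall p, p \in S -> p.2 \in A.
  move=> [x y]; rewrite inE /= => /and3P [xB yV rxy].
  have xV : x \in V by apply: (subsetP BV).
  move: (Hr x y xV yV rxy) => /orP [/andP [xA _]|/andP [_ ->]] //.
  by case: (disj x xA xB).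
have -> : edges V r = [set [set p.1; p.2] | p in S].
  apply/setP => E; apply/idP/idP.
  - rewrite inE => /existsP [x /andP [xV /existsP [y /andP [yV /and3P [nxy rxy /eqP ->]]]]].
    move: (Hr x y xV yV rxy) => /orP [/andP [xA yB]|/andP [xB yA]].
    + apply/imsetP; exists (y, x); first by rewrite inE /= yB xV rs.
      by rewrite /= setUC.
    + apply/imsetP; exists (x, y) => //; by rewrite inE /= xB yV.
  - move=> /imsetP [[x y] pS ->] /=.
    have yA := S2A _ pS.
    move: pS; rewrite inE /= => /and3P [xB yV rxy].
    rewrite inE; apply/existsP; exists x; rewrite (subsetP BV) //=.
    apply/existsP; exists y; rewrite yV rxy eqxx andbT /=.
    rewrite andbT; apply/eqP => exy; move: yA; rewrite -exy => yA; by case: (disj x yA xB).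
rewrite card_in_imset.
  rewrite -sum1_card (eq_bigl (fun p : T * T => (p.1 \in B) && ((p.2 \in V) && r p.1 p.2))); last first.
    by move=> p; rewrite inE.
  rewrite -(pair_big_dep (fun i => i \in B) (fun i j => (j \in V) && r i j) (fun _ _ => 1%N)) /=.
  apply: eq_bigr => b _; rewrite /deg -sum1_card.
  by apply: eq_bigl => u; rewrite inE.
move=> [x1 y1] [x2 y2] p1S p2S /= E.
have y1A := S2A _ p1S; have y2A := S2A _ p2S.
move: p1S p2S; rewrite !inE /= => /and3P [x1B _ _] /and3P [x2B _ _].
have : x1 \in [set x2; y2] by rewrite -E !inE eqxx.
rewrite !inE => /orP [/eqP ex|/eqP ex]; last by subst; case: (disj _ y2A x1B).
have : y1 \in [set x2; y2] by rewrite -E !inE eqxx orbT.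
rewrite !inE => /orP [/eqP ey|/eqP ey]; last by subst.
by subst; case: (disj _ y1A x2B).
Qed.
Definition pc (T : finType) (e : rel T) (X Y : {set T}) : nat :=
  \sum_(x in X) \sum_(y in Y) (e x y : nat).

Lemma pcC (T : finType) (e : rel T) (X Y : {set T}) : symmetric e -> pc e X Y = pc e Y X.
Proof.
move=> es; rewrite /pc exchange_big /=; apply: eq_bigr => y _; apply: eq_bigr => x _.
by rewrite es.
Qed.

Lemma pcD1 (T : finType) (e : rel T) (X Y : {set T}) x : x \in X ->
  pc e X Y = (\sum_(y in Y) (e x y : nat) + pc e (X :\ x) Y)%N.
Proof. by move=> xX; rewrite /pc (big_setD1 _ xX). Qed.

Lemma pc0 (T : finType) (e : rel T) (Y : {set T}) : pc e set0 Y = 0%N.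
Proof. by rewrite /pc big_set0. Qed.


Local Open Scope ring_scope.

Lemma exists_max (R : realFieldType) (I : finType) (P : pred I) (F : I -> R) i0 :
  P i0 -> exists2 i, P i & forall j, P j -> F j <= F i.
Proof.
move=> Pi0. case: (@arg_maxP _ R I i0 P F Pi0) => i Pi Hi. by exists i.
Qed.


Lemma step1 (R : realFieldType) (T : finType) (e : rel T) (k : R) (P Q : {set T}) :
  symmetric e -> 0 < k ->
  k / 2 * (#|P| + #|Q|)%:R <= (pc e P Q)%:R ->
  P :|: Q != set0 ->
  exists X Y : {set T}, [/\ X \subset P, Y \subset Q, X :|: Y != set0,
    (forall x, x \in X -> k / 2 <= (\sum_(y in Y) (e x y : nat))%:R) &
    (forall y, y \in Y -> k / 2 <= (\sum_(x in X) (e y x : nat))%:R)].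
Proof.
move=> es k0 HPQ PQ0.
pose phi (p : {set T} * {set T}) : R :=
  (pc e p.1 p.2)%:R - k / 2 * (#|p.1| + #|p.2|)%:R.
pose valid (p : {set T} * {set T}) := (p.1 \subset P) && (p.2 \subset Q).
have deg_ok : forall X Y, valid (X, Y) -> (forall j, valid j -> phi j <= phi (X, Y)) ->
    (forall x, x \in X -> k / 2 <= (\sum_(y in Y) (e x y : nat))%:R) /\
    (forall y, y \in Y -> k / 2 <= (\sum_(x in X) (e y x : nat))%:R).
  move=> X Y /andP [/= XP YQ] Hmax; split.
  - move=> x xX.
    have := Hmax (X :\ x, Y); rewrite /valid /= (subset_trans (subsetDl X [set x]) XP) YQ.
    move=> /(_ isT); rewrite /phi /= (pcD1 e Y xX) (cardsD1 x X) xX.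
    rewrite /= !natrD; lra.
  - move=> y yY.
    have := Hmax (X, Y :\ y); rewrite /valid /= (subset_trans (subsetDl Y [set y]) YQ) XP.
    move=> /(_ isT); rewrite /phi /= (pcC X Y es) (pcC X (Y :\ y) es) (pcD1 e X yY) (cardsD1 y Y) yY.
    rewrite /= !natrD; lra.
have vPQ0 : valid (P, Q) by rewrite /valid /= !subxx.
have [[X Y] vXY HXY] := @exists_max R _ valid phi (P, Q) vPQ0.
have [XY0|XY0] := eqVneq (X :|: Y) set0.
- have vPQ : valid (P, Q) by rewrite /valid /= !subxx.
  have HPQmax : forall j, valid j -> phi j <= phi (P, Q).
    move=> j vj; apply: (le_trans (HXY j vj)).
    move: XY0 => /setP XY0.
    have -> : X = set0 by apply/setP => z; move: (XY0 z); rewrite !inE; case: (z \in X).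
    have -> : Y = set0 by apply/setP => z; move: (XY0 z); rewrite !inE orbC; case: (z \in Y).
    rewrite /phi /= pc0 !cards0 /=; lra.
  have [h1 h2] := deg_ok P Q vPQ HPQmax.
  by exists P, Q; split.
- move: vXY => /andP [/= XP YQ].
  have [h1 h2] := deg_ok X Y (introT andP (conj XP YQ)) HXY.
  by exists X, Y; split.
Qed.
Lemma step2 (R : realFieldType) (T : finType) (e : rel T) (k : R) (X Y : {set T}) :
  symmetric e -> 2 <= k -> X :&: Y = set0 -> X != set0 -> (#|Y| <= #|X|)%N ->
  (forall x, x \in X -> k / 2 <= (#|[set y in Y | e x y]|)%:R) ->
  exists (VH : {set T}) (rH : rel T) (A B : {set T}),
    [/\ subgraph VH rH [set: T] e,
        bipartite_with VH rH A B,
        k / 4 <= avg_deg R VH rH,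
        (forall v, v \in A -> (deg VH rH v)%:R <= k) &
        (k ^+ 6 * (#|B|)%:R <= (#|A|)%:R \/ (maxdeg VH rH)%:R <= k ^+ 7)].
Proof.
move=> es k2 XY0 /set0Pn [x0 x0X] YX hd.
have disj : forall z, z \in X -> z \in Y -> False.
  by move=> z zX zY; move/setP: XY0 => /(_ z); rewrite !inE zX zY.
have exm : exists n : nat, k / 2 <= n%:R by exists #|[set y in Y | e x0 y]|; apply: hd.
pose m := ex_minn exm.
have [mk mmin] : k / 2 <= m%:R /\ forall n : nat, k / 2 <= n%:R -> (m <= n)%N.
  by rewrite /m; case: ex_minnP.
have mle : m%:R <= k.
  case Em: m => [|n]; first by rewrite /=; lra.
  have : ~~ (k / 2 <= n%:R).
    apply/negP => /mmin; rewrite Em; by rewrite ltnn.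
  rewrite -ltNge => h; rewrite -natr1; lra.
pose N x := [set y in take m (enum [set y in Y | e x y])].
have NY : forall x y, y \in N x -> (y \in Y) && e x y.
  move=> x y; rewrite inE => /mem_take; by rewrite mem_enum inE.
have Ncard : forall x, x \in X -> #|N x| = m.
  move=> x xX; rewrite cardsE.
  have /card_uniqP -> := take_uniq m (enum_uniq (mem [set y in Y | e x y])).
  rewrite size_takel // -cardE; apply: mmin; exact: hd.
pose D y := #|[set x in X | y \in N x]|.
pose rS (S : {set T}) : rel T := fun x y =>
  ((x \in X) && (y \in S) && (y \in N x)) || ((y \in X) && (x \in S) && (x \in N y)).
have build : forall S : {set T}, S \subset Y ->
  [/\ subgraph (X :|: S) (rS S) [set: T] e,
      bipartite_with (X :|: S) (rS S) X S,
      #|edges (X :|: S) (rS S)| = (\sum_(y in S) D y)%N,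
      (forall v, v \in X -> deg (X :|: S) (rS S) v <= m)%N &
      ((forall v, v \in S -> deg (X :|: S) (rS S) v = D v) /\
       #|X :|: S| = (#|X| + #|S|)%N)].
  move=> S SY.
  have nXS : forall z, z \in X -> z \in S -> False.
    by move=> z zX zS; apply: (disj z zX (subsetP SY z zS)).
  have XS0 : X :&: S = set0.
    apply/setP => z; rewrite !inE; apply/negbTE/negP => /andP [zX zS]; exact: (nXS z zX zS).
  have rsym : symmetric (rS S) by move=> x y; rewrite /rS orbC.
  have bip : bipartite_with (X :|: S) (rS S) X S.
    split => // x y _ _; rewrite /rS => /orP [/andP [/andP [-> ->] _]|/andP [/andP [-> ->] _]] //.
    by rewrite orbT.
  have degS : forall v, v \in S -> deg (X :|: S) (rS S) v = D v.
    move=> v vS; rewrite /deg /D; apply: eq_card => u; rewrite !inE /rS.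
    have -> : (v \in X) = false by apply/negP => vX; exact: (nXS v vX vS).
    rewrite vS /= andbT; by case: (u \in X); rewrite /= ?inE ?andbF.
  split => //.
  - split; [by rewrite subsetT | by [] | ].
    move=> x y; rewrite /rS => /orP [/andP [/andP [xX yS] yN]|/andP [/andP [yX xS] xN]].
    + by rewrite !inE xX yS orbT; move: (NY _ _ yN) => /andP [].
    + by rewrite !inE xS yX orbT; move: (NY _ _ xN) => /andP [_]; rewrite es.
  - rewrite (edges_card rsym bip); apply: eq_bigr => y yS; exact: degS.
  - move=> v vX; rewrite -(Ncard v vX); apply: subset_leq_card; apply/subsetP => u.
    rewrite !inE /rS vX /=.
    have -> : (v \in S) = false by apply/negP => vS; exact: (nXS v vX vS).
    by rewrite andbF orbF => /andP [_ /andP [_ h]]; rewrite ?inE in h *.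
  - split => //; by rewrite cardsU XS0 cards0 subn0.
have e0 : (\sum_(y in Y) D y)%N = (m * #|X|)%N.
  rewrite /D; under eq_bigr => y _ do rewrite card_sum.
  rewrite exchange_big /=.
  transitivity (\sum_(x in X) m)%N; last by rewrite sum_nat_const mulnC.
  apply: eq_bigr => x xX; rewrite -(Ncard x xX) -card_sum.
  apply: eq_card => y; rewrite inE; case: (boolP (y \in N x)) => h; last by rewrite andbF.
  by move: (NY _ _ h) => /andP [->].
pose Yh := [set y in Y | k ^+ 7 < (D y)%:R].
pose Yl := Y :\: Yh.
have YhY : Yh \subset Y by apply/subsetP => y; rewrite inE => /andP [].
have YlY : Yl \subset Y by apply: subsetDl.
pose eh := (\sum_(y in Yh) D y)%N.
pose el := (\sum_(y in Yl) D y)%N.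
have esplit : (m * #|X| = eh + el)%N.
  by rewrite -e0 (big_setID Yh) /= (setIidPr YhY).
have Xpos : (0 < #|X|)%N by rewrite card_gt0; apply/set0Pn; exists x0.
have k0 : 0 < k by lra.
have kk7 : k <= k ^+ 7.
  rewrite exprS -{1}[k]mulr1; apply: ler_wpM2l; first lra.
  apply: exprn_ege1; lra.
have Xr : 0 < (#|X|)%:R :> R by rewrite ltr0n.
have Xge : 0 <= (#|X|)%:R :> R by apply: ltW.
case: (leqP (m * #|X|) (2 * eh)) => Hc.
- have [sg bp ec dX [dS cV]] := build Yh YhY.
  have F2 : m%:R * (#|X|)%:R <= 2 * eh%:R :> R.
    by rewrite -natrM -[2 * _]/((2%N)%:R * _) -natrM ler_nat.
  have F3 : k ^+ 7 * (#|Yh|)%:R <= eh%:R.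
    rewrite /eh natr_sum mulr_natr -sumr_const; apply: ler_sum => y.
    by rewrite inE => /andP [_ h]; apply: ltW.
  have G1 : k * (#|X|)%:R <= 2 * m%:R * (#|X|)%:R by apply: ler_wpM2r => //; lra.
  have G2 : k * (#|Yh|)%:R <= k ^+ 7 * (#|Yh|)%:R by apply: ler_wpM2r.
  have G3 : m%:R * (#|X|)%:R <= k * (#|X|)%:R by apply: ler_wpM2r.
  have F4 : eh%:R <= m%:R * (#|X|)%:R :> R by rewrite -natrM esplit ler_nat leq_addr.
  exists (X :|: Yh), (rS Yh), X, Yh; split => //.
  + rewrite /avg_deg ec cV -/eh ler_pdivlMr; last by rewrite ltr0n addn_gt0 Xpos.
    rewrite natrM natrD; lra.
  + move=> v vX; apply: le_trans mle; rewrite ler_nat; exact: dX.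
  + left; rewrite -(ler_pM2l k0) mulrA -exprS; lra.
- have [sg bp ec dX [dS cV]] := build Yl YlY.
  have F2 : m%:R * (#|X|)%:R < 2 * el%:R :> R.
    have : (m * #|X| < 2 * el)%N by rewrite esplit; lia.
    by rewrite -natrM -[2 * _]/((2%N)%:R * _) -natrM ltr_nat.
  have G1 : k * (#|X|)%:R <= 2 * m%:R * (#|X|)%:R by apply: ler_wpM2r => //; lra.
  have Yl_le : (#|Yl| <= #|X|)%N by apply: leq_trans YX; apply: subset_leq_card.
  have G4 : k * (#|Yl|)%:R <= k * (#|X|)%:R by apply: ler_wpM2l; [lra | rewrite ler_nat].
  exists (X :|: Yl), (rS Yl), X, Yl; split => //.
  + rewrite /avg_deg ec cV -/el ler_pdivlMr; last by rewrite ltr0n addn_gt0 Xpos.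
    rewrite natrM natrD; lra.
  + move=> v vX; apply: le_trans mle; rewrite ler_nat; exact: dX.
  + right; rewrite /maxdeg.
    apply: (big_ind (fun n : nat => n%:R <= k ^+ 7)).
    * have := ler0n R 0; lra.
    * move=> a b ha hb /=; case: (leqP a b) => h.
      - by [].
      - by [].
    * move=> v; rewrite inE => /orP [vX|vYl].
      - apply: le_trans kk7; apply: le_trans mle; rewrite ler_nat; exact: dX.
      - rewrite dS //; move: vYl; rewrite !inE => /andP [h vY]; move: h.
        by rewrite vY /= -leNgt.
Qed.

Theorem lemma8 (R : realFieldType) (T : finType) (e : rel T) (k : R) :
  simple_graph e -> bipartite [set: T] e -> 2 <= k ->
  k <= avg_deg R [set: T] e ->
  exists (VH : {set T}) (rH : rel T) (A B : {set T}),
    [/\ subgraph VH rH [set: T] e,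
        bipartite_with VH rH A B,
        k / 4 <= avg_deg R VH rH,
        (forall v, v \in A -> (deg VH rH v)%:R <= k) &
        (k ^+ 6 * (#|B|)%:R <= (#|A|)%:R \/ (maxdeg VH rH)%:R <= k ^+ 7)].
Proof.
move=> [es _] [P [Q bip]] k2 kavg.
have bip' := bip; case: bip' => PQ0 PQT Hb.
have disj : forall z, z \in P -> z \in Q -> False.
  by move=> z zP zQ; move/setP: PQ0 => /(_ z); rewrite !inE zP zQ.
have E1 : #|edges [set: T] e| = pc e P Q.
  rewrite (edges_card es bip) (pcC _ _ es) /pc; apply: eq_bigr => q qQ.
  rewrite /deg -card_sum; apply: eq_card => u; rewrite !inE.
  case: (boolP (e q u)) => h; last by rewrite !andbF.
  rewrite !andbT; apply/esym; move: (Hb q u (in_setT q) (in_setT u) h) => /orP [/andP [qP _]|/andP [_ ->]] //.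
  by case: (disj q qP qQ).
have ncard : #|[set: T]| = (#|P| + #|Q|)%N by rewrite -PQT cardsU PQ0 cards0 subn0.
have npos : (0 < #|[set: T]|)%N.
  rewrite lt0n; apply/negP => /eqP n0; move: kavg; rewrite /avg_deg n0 invr0 mulr0; lra.
have k0 : 0 < k by lra.
have Hphi : k / 2 * (#|P| + #|Q|)%:R <= (pc e P Q)%:R.
  move: kavg; rewrite /avg_deg E1 -ncard ler_pdivlMr ?ltr0n // natrM; lra.
have PQne : P :|: Q != set0 by rewrite PQT -card_gt0.
have [X [Y [XP YQ XYne hX hY]]] := step1 es k0 Hphi PQne.
have XY0 : X :&: Y = set0.
  apply/setP => z; rewrite !inE; apply/negbTE/negP => /andP [zX zY].
  exact: (disj z (subsetP XP z zX) (subsetP YQ z zY)).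
have hX' : forall x, x \in X -> k / 2 <= (#|[set y in Y | e x y]|)%:R.
  by move=> x xX; rewrite card_sum; apply: hX.
have hY' : forall y, y \in Y -> k / 2 <= (#|[set x in X | e y x]|)%:R.
  by move=> y yY; rewrite card_sum; apply: hY.
case: (leqP #|Y| #|X|) => hc.
- apply: (step2 es k2 XY0 _ hc hX').
  rewrite -card_gt0; move: XYne; rewrite -card_gt0 cardsU; lia.
- apply: (@step2 R T e k Y X es k2 _ _ (ltnW hc) hY'); first by rewrite setIC.
  rewrite -card_gt0; move: XYne; rewrite -card_gt0 cardsU; lia.
Qed.
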